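(* For every $\mathcal{A}\subseteq[\omega]^\omega$, Player I has a winning strategy in the reaping* game with respect to $\mathcal{A}$.
   Context: For $x\subseteq\omega$ and $y\in[\omega]^\omega$, $y$ reaps $x$ if $y\subseteq^* x$ or $y\subseteq^*\omega\setminus x$ (where $A\subseteq^* B$ means $A\setminus B$ is finite). For $\mathcal{A}\subseteq[\omega]^\omega$, the reaping* game with respect to $\mathcal{A}$: at round $k$, Player I plays $i_k\in\{0,1\}$ and then Player II plays $j_k\in\{0,1\}$. Player II wins iff $j_k=1$ for infinitely many $k$, $\{k:j_k=1\}\in\mathcal{A}$, and $\{k:j_k=1\}$ reaps $\{k:i_k=1\}$. *)

(* Defs.v *)
From Stdlib Require Import List Arith.
Import ListNotations.

Definition infinite_set (y : nat -> Prop) : Prop :=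
  forall N : nat, exists n, N <= n /\ y n.

(* A ⊆* B : A \ B is finite *)
Definition almost_subset (a b : nat -> Prop) : Prop :=
  exists N : nat, forall n, N <= n -> a n -> b n.

Definition reaps (y x : nat -> Prop) : Prop :=
  almost_subset y x \/ almost_subset y (fun n => ~ x n).

(* A strategy for Player I: given the list [j_0; ...; j_{k-1}] of Player II's
   previous moves (Player I's own previous moves are determined by the
   strategy), it returns Player I's move i_k (true = 1, false = 0). *)
Definition strategyI := list bool -> bool.

Definition playI (sigma : strategyI) (j : nat -> bool) (k : nat) : bool :=
  sigma (map j (seq 0 k)).

Definition II_wins (A : (nat -> Prop) -> Prop) (i j : nat -> bool) : Prop :=
  let Y := fun k => j k = true in
  let X := fun k => i k = true in
  infinite_set Y /\ A Y /\ reaps Y X.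

Definition winning_strategyI (A : (nat -> Prop) -> Prop) (sigma : strategyI) : Prop :=
  forall j : nat -> bool, ~ II_wins A (playI sigma j) j.

(* Main.v *)
Require Import Defs.
From Stdlib Require Import List Arith Lia Bool.
Import ListNotations.

Fixpoint cnt (l : list bool) : nat :=
  match l with [] => 0 | b :: t => (if b then 1 else 0) + cnt t end.

Lemma cnt_app l x : cnt (l ++ [x]) = cnt l + (if x then 1 else 0).
Proof. induction l as [|a l IH]; simpl; [lia|rewrite IH; lia]. Qed.

Definition c (j : nat -> bool) k := cnt (map j (seq 0 k)).

Lemma c_S j k : c j (S k) = c j k + (if j k then 1 else 0).
Proof. unfold c. rewrite seq_S, map_app. simpl. apply cnt_app. Qed.

Lemma key j N b :
  infinite_set (fun k => j k = true) ->
  (forall n, N <= n -> j n = true -> Nat.even (c j n) = b) -> False.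
Proof.
  intros Hinf H.
  destruct (Hinf N) as [n1 [Hn1 Hj1]].
  assert (E1 := H n1 Hn1 Hj1).
  assert (All : forall m, Nat.even (c j (S n1 + m)) = negb b).
  { induction m as [|m IH].
    - rewrite Nat.add_0_r, c_S, Hj1, Nat.add_1_r, Nat.even_succ, <- Nat.negb_even, E1.
      reflexivity.
    - rewrite Nat.add_succ_r, c_S.
      destruct (j (S n1 + m)) eqn:Hm.
      + exfalso. assert (E := H (S n1 + m) ltac:(lia) Hm).
        rewrite IH in E. destruct b; discriminate.
      + rewrite Nat.add_0_r. exact IH. }
  destruct (Hinf (S n1)) as [n2 [Hn2 Hj2]].
  assert (E2 := H n2 ltac:(lia) Hj2).
  replace n2 with (S n1 + (n2 - S n1)) in E2 by lia.
  rewrite All in E2. destruct b; discriminate.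
Qed.

Theorem mainTheorem8 (A : (nat -> Prop) -> Prop)
  (hA : forall y, A y -> infinite_set y) :
  exists sigma : strategyI, winning_strategyI A sigma.
Proof.
  exists (fun l => Nat.even (cnt l)).
  intros j [Hinf [_ [[N HN] | [N HN]]]].
  - apply (key j N true Hinf). intros n Hn Hj. apply (HN n Hn Hj).
  - apply (key j N false Hinf). intros n Hn Hj.
    specialize (HN n Hn Hj). unfold playI in HN. simpl in HN.
    destruct (Nat.even (c j n)) eqn:E; [exfalso; apply HN; exact E|reflexivity].
Qed.
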